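(* For positive integers $p,q$, the transition functions satisfy: (1) $\tau^p_q(n+p)=\tau^p_q(n)+q$ for each $n\in\mathbb{N}$; (2) $\tau^p_q$ is order-preserving; (3) $\tau^q_p\circ\tau^p_q\le\mathrm{id}_{\mathbb{N}}$ (pointwise); (4) $\tau^q_p\circ\tau^p_q=\mathrm{id}_{\mathbb{N}}$ if $p\le q$; (5) $(\tau^p_q)^{-1}(0)=\{0\}$ if either $p=q=1$ or $p,q\ge 2$.
   Context: $\mathbb{N}=\{0,1,2,\dots\}$. For positive integers $p,q$, the transition function $\tau^p_q:\mathbb{N}\to\mathbb{N}$ is defined by $\tau^p_q(mp+n)=mq+\min\{n,q-1\}$ for $m\in\mathbb{N}$ and $0\le n<p$. *)

(* Defs.v *)
From mathcomp Require Import all_boot.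
Set Implicit Arguments. Unset Strict Implicit. Unset Printing Implicit Defensive.

Definition tau (p q : nat) (x : nat) : nat :=
  (x %/ p) * q + minn (x %% p) q.-1.

(* Main.v *)
Require Import Defs.
From mathcomp Require Import all_boot.
From mathcomp Require Import zify.

Lemma tauE p q m r : r < p -> tau p q (m * p + r) = m * q + minn r q.-1.
Proof.
move=> hr; rewrite /tau divnMDl ?modnMDl ?divn_small ?modn_small //; last by case: p hr.
by rewrite addn0.
Qed.

Theorem proposition2p3 (p q : nat) (hp : 0 < p) (hq : 0 < q) :
  (forall n : nat, tau p q (n + p) = tau p q n + q) /\
  {homo tau p q : x y / x <= y} /\
  (forall n : nat, tau q p (tau p q n) <= n) /\
  (p <= q -> forall n : nat, tau q p (tau p q n) = n) /\
  ((p = 1 /\ q = 1) \/ (2 <= p /\ 2 <= q) ->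
     forall n : nat, tau p q n = 0 <-> n = 0).
Proof.
have dec n : exists m r, r < p /\ n = m * p + r.
  by exists (n %/ p), (n %% p); rewrite ltn_pmod // -divn_eq.
split.
  move=> n; have [m [r [hr ->]]] := dec n.
  rewrite -addnA (addnC r) addnA -[m * p + p]mulSnr !tauE //; lia.
split.
  move=> x y; have [m [r [hr ->]]] := dec x; have [m' [r' [hr' ->]]] := dec y.
  rewrite !tauE // => hxy.
  have [hlt|hge] := ltnP m m'.
    have h1 : m.+1 * q <= m' * q by rewrite leq_mul2r hlt orbT.
    rewrite mulSn in h1; lia.
  have e : m = m' by nia.
  subst m'; lia.
split.
  move=> n; have [m [r [hr ->]]] := dec n.
  rewrite tauE // tauE; lia.
split.
  move=> hpq n; have [m [r [hr ->]]] := dec n.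
  rewrite tauE // tauE; lia.
move=> hc n; have [m [r [hr ->]]] := dec n.
rewrite tauE //; split; last first.
  move=> h; have hm : m = 0 by nia.
  subst m; have -> : r = 0 by lia.
  by rewrite mul0n add0n; apply/minn_idPl.
move=> h.
have hm : m = 0 by nia.
subst m; lia.
Qed.
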